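(* A ring $R$ is strongly nil-clean if and only if $R$ is a CSNC ring and $R$ is semi-potent.
   Context: All rings are associative with identity $1$. For a ring $R$, $\mathrm{Id}(R)$, $U(R)$, $\mathrm{Nil}(R)$ denote the sets of idempotents, units and nilpotent elements, and $J(R)$ the Jacobson radical. An element $a\in R$ is clean if $a=e+u$ for some $e\in\mathrm{Id}(R)$, $u\in U(R)$. An element $a$ is strongly nil-clean if $a=e+q$ with $e\in \mathrm{Id}(R)$, $q\in\mathrm{Nil}(R)$ and $eq=qe$; the ring $R$ is strongly nil-clean if every element is strongly nil-clean. A ring $R$ is called CSNC if every clean element of $R$ is strongly nil-clean. A ring $R$ is semi-potent if every one-sided ideal of $R$ not contained in $J(R)$ contains a nonzero idempotent. *)

(* Defs.v *)
From mathcomp Require Import all_boot all_algebra.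
Set Implicit Arguments. Unset Strict Implicit. Unset Printing Implicit Defensive.
Import GRing.Theory.
Local Open Scope ring_scope.

Section RingDefs.
Variable R : pzRingType.

Definition idem (e : R) : Prop := e * e = e.
Definition unitP (u : R) : Prop := exists v : R, u * v = 1 /\ v * u = 1.
Definition nilp (q : R) : Prop := exists n : nat, q ^+ n = 0.

Definition clean_elt (a : R) : Prop :=
  exists e u, idem e /\ unitP u /\ a = e + u.
Definition sn_clean_elt (a : R) : Prop :=
  exists e q, idem e /\ nilp q /\ a = e + q /\ e * q = q * e.

Definition strongly_nil_clean : Prop := forall a : R, sn_clean_elt a.
Definition CSNC : Prop := forall a : R, clean_elt a -> sn_clean_elt a.

Definition additive_subgroup (I : R -> Prop) : Prop :=
  I 0 /\ (forall x y, I x -> I y -> I (x - y)).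
Definition left_ideal (I : R -> Prop) : Prop :=
  additive_subgroup I /\ (forall r x, I x -> I (r * x)).
Definition right_ideal (I : R -> Prop) : Prop :=
  additive_subgroup I /\ (forall r x, I x -> I (x * r)).

Definition maximal_left_ideal (M : R -> Prop) : Prop :=
  left_ideal M /\ (exists x, ~ M x) /\
  (forall N, left_ideal N -> (forall x, M x -> N x) ->
     (forall x, N x <-> M x) \/ (forall x, N x)).

Definition jacobson (x : R) : Prop :=
  forall M, maximal_left_ideal M -> M x.

Definition semi_potent : Prop :=
  forall I : R -> Prop, (left_ideal I \/ right_ideal I) ->
    ~ (forall x, I x -> jacobson x) ->
    exists e, I e /\ idem e /\ e <> 0.

End RingDefs.

(* Main.v *)
From HB Require Import structures.
Require Import Defs.
From mathcomp Require Import all_boot all_algebra ring.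
From Stdlib Require Import Classical.
From mathcomp Require classical_sets.
Set Implicit Arguments. Unset Strict Implicit. Unset Printing Implicit Defensive.
Import GRing.Theory.
Local Open Scope ring_scope.

Notation nilp := Defs.nilp.
Notation unitP := Defs.unitP.
Notation idem := Defs.idem.

Section Basics.
Variable R : pzRingType.
Implicit Types x y z e q u v r : R.

Lemma nilpN q : nilp q -> nilp (- q).
Proof. by case=> n hn; exists n; rewrite exprNn hn mulr0. Qed.

Lemma nilpNE q : nilp (- q) -> nilp q.
Proof. by move/nilpN; rewrite opprK. Qed.

Lemma nilp_commM x y : GRing.comm x y -> nilp x -> nilp (x * y).
Proof. by move=> c [n hn]; exists n; rewrite exprMn_comm // hn mul0r. Qed.

Lemma nilp_swap x y : nilp (x * y) -> nilp (y * x).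
Proof.
case=> n hn; exists n.+1.
have -> : forall k, (y * x) ^+ k.+1 = y * (x * y) ^+ k * x.
  elim=> [|k IH]; first by rewrite expr1 expr0 mulr1.
  by rewrite exprS IH [in RHS]exprS !mulrA.
by rewrite hn mulr0 mul0r.
Qed.

Lemma unit_1m q : nilp q ->
  exists u, (1 - q) * u = 1 /\ u * (1 - q) = 1 /\
    (forall z, GRing.comm z q -> GRing.comm z u).
Proof.
case=> n hn; exists (\sum_(i < n) q ^+ i).
have cq : GRing.comm (1 - q) (\sum_(i < n) q ^+ i).
  apply: commr_sum => i _; apply: commrX.
  by apply: commr_sym; apply: commrB; [apply: commr1|].
have h1 : (1 - q) * \sum_(i < n) q ^+ i = 1.
  have := subrX1 q n; rewrite hn sub0r => /(congr1 (fun t => - t)).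
  by rewrite opprK -mulNr opprB.
split=> //; split; first by rewrite -cq.
by move=> z czq; apply: commr_sum => i _; apply: commrX.
Qed.

Lemma unitP_1m q : nilp q -> unitP (1 - q).
Proof. by case/unit_1m=> u [h1 [h2 _]]; exists u. Qed.

Lemma unit_1p q : nilp q ->
  exists u, (1 + q) * u = 1 /\ u * (1 + q) = 1 /\
    (forall z, GRing.comm z q -> GRing.comm z u).
Proof.
move/nilpN/unit_1m=> [u [h1 [h2 h3]]]; exists u; rewrite opprK in h1 h2.
split=> //; split=> // z c; apply: h3; exact: commrN.
Qed.

Lemma spectral y e q N : idem e -> q ^+ N = 0 -> y = e + q -> e * q = q * e ->
  exists w1 w2, e = w1 * y /\ e = y * w2.
Proof.
move=> ie hq hy ceq.
have hn : nilp q by exists N.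
have [u [u1 [u2 cu]]] := unit_1p hn.
have ceu : GRing.comm e u by apply: cu.
have cqu : GRing.comm (1 + q) u.
  apply: commr_sym; apply: commrD; first by rewrite /GRing.comm mulr1 mul1r.
  by apply: commr_sym; apply: cu.
have ye : forall k, y ^+ k * e = e * (1 + q) ^+ k.
  elim=> [|k IH]; first by rewrite !expr0 mul1r mulr1.
  rewrite exprSr -mulrA.
  have -> : y * e = e * (1 + q) by rewrite hy mulrDl mulrDr ie mulr1 ceq.
  by rewrite mulrA IH -mulrA -exprSr.
have ye' : forall k, y ^+ k * (1 - e) = q ^+ k * (1 - e).
  have c1 : q * (1 - e) = (1 - e) * q by rewrite mulrBr mulrBl mulr1 mul1r ceq.
  elim=> [|k IH]; first by rewrite !expr0.
  rewrite exprSr -mulrA.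
  have -> : y * (1 - e) = q * (1 - e).
    by rewrite hy mulrDl mulrBr ie mulr1 subrr add0r.
  by rewrite c1 mulrA IH -mulrA -c1 mulrA -exprSr.
have yn : y ^+ N.+1 = e * (1 + q) ^+ N.+1.
  have := ye' N.+1; rewrite [q ^+ N.+1]exprSr hq mul0r mul0r mulrBr mulr1.
  by move/eqP; rewrite subr_eq0 => /eqP ->; rewrite ye.
exists (u ^+ N.+1 * y ^+ N), (y ^+ N * u ^+ N.+1); split.
  rewrite -mulrA -exprSr yn mulrA.
  have <- : GRing.comm e (u ^+ N.+1) by apply: commrX.
  by rewrite -mulrA -exprMn_comm; [rewrite u2 expr1n mulr1| apply: commr_sym].
rewrite mulrA -exprS yn -mulrA -exprMn_comm //.
by rewrite u1 expr1n mulr1.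
Qed.

End Basics.
Section Fwd.
Variable R : pzRingType.
Implicit Types x y z e q u v r m : R.

Lemma as_opp (I : R -> Prop) x : additive_subgroup I -> I x -> I (- x).
Proof. by case=> h0 hs hx; rewrite -sub0r; apply: hs. Qed.

Lemma as_add (I : R -> Prop) x y : additive_subgroup I -> I x -> I y -> I (x + y).
Proof.
move=> hI hx hy; case: (hI) => _ hs; rewrite -[y]opprK; apply: hs => //.
exact: as_opp.
Qed.

Lemma max_gen (M : R -> Prop) x : maximal_left_ideal M -> ~ M x ->
  exists m r, M m /\ 1 = m + r * x.
Proof.
move=> [[[M0 Ms] Mm] [_ Mmax]] nMx.
pose N z := exists m r, M m /\ z = m + r * x.
have hN : left_ideal N.
  split; first split.
  - by exists 0, 0; rewrite mul0r addr0.
  - move=> a b [m1 [r1 [h1 ->]]] [m2 [r2 [h2 ->]]].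
    exists (m1 - m2), (r1 - r2); split; first exact: Ms.
    by rewrite mulrBl opprD addrACA.
  - move=> t a [m1 [r1 [h1 ->]]]; exists (t * m1), (t * r1); split; first exact: Mm.
    by rewrite mulrDr mulrA.
have sub : forall z, M z -> N z by move=> z hz; exists z, 0; rewrite mul0r addr0.
case: (Mmax N hN sub) => [h|h].
  exfalso; apply: nMx; apply/h; exists 0, 1; by rewrite mul1r add0r.
by case: (h 1) => m [r [hm e]]; exists m, r.
Qed.

Lemma max_no_unit (M : R -> Prop) m v : maximal_left_ideal M -> M m -> v * m = 1 -> False.
Proof.
move=> [[_ Mm] [[z nz] _]] hm hv; apply: nz.
by rewrite -[z]mulr1 -hv; apply: (Mm); apply: (Mm).
Qed.

Lemma snc_semipotent : strongly_nil_clean R -> semi_potent R.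
Proof.
move=> H I HI nsub.
have [x [Ix nJx]] : exists x, I x /\ ~ jacobson x.
  apply: NNPP => hn; apply: nsub => x Ix; apply: NNPP => nj; apply: hn; by exists x.
have [M [hM nMx]] : exists M, maximal_left_ideal M /\ ~ M x.
  apply: NNPP => hn; apply: nJx => M hM; apply: NNPP => nm; apply: hn; by exists M.
have [m [r [hm e1]]] := max_gen hM nMx.
have contra : nilp (r * x) -> False.
  move=> hn; have [u [_ [hu _]]] := unit_1m hn.
  have em : 1 - r * x = m by rewrite e1 addrK.
  by apply: (max_no_unit hM hm (v := u)); rewrite -em.
case: HI => [[_ Il]|[_ Ir]].
  have Iy : I (r * x) by apply: (Il).
  have [e [q [ie [[N hq] [hy ceq]]]]] := H (r * x).
  case: (eqVneq e 0) => [e0|ne0].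
    by exfalso; apply: contra; exists N; rewrite hy e0 add0r.
  have [w1 [w2 [h1 h2]]] := spectral ie hq hy ceq.
  exists e; split. rewrite h1. exact: (Il _ _ Iy). split=> //; exact/eqP.
have Iy : I (x * r) by apply: (Ir).
have [e [q [ie [[N hq] [hy ceq]]]]] := H (x * r).
case: (eqVneq e 0) => [e0|ne0].
  by exfalso; apply: contra; apply: nilp_swap; exists N; rewrite hy e0 add0r.
have [w1 [w2 [h1 h2]]] := spectral ie hq hy ceq.
exists e; split; first by rewrite h2; exact: (Ir _ _ Iy).
by split=> //; exact/eqP.
Qed.
End Fwd.
Section UUsec.
Variable R : pzRingType.
Implicit Types x y z e q u v r m : R.

Lemma nilp_commMl x y : GRing.comm x y -> nilp y -> nilp (x * y).
Proof. by move=> c [n hn]; exists n; rewrite exprMn_comm // hn mulr0. Qed.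

Lemma idem_unit e w : idem e -> e * w = 1 -> e = 1.
Proof. by move=> ie ew; rewrite -ew -{2}ie -mulrA ew mulr1. Qed.

Lemma csnc_UU : CSNC R -> forall u, unitP u -> nilp (u - 1).
Proof.
move=> H u [v [uv vu]].
have [e [q [ie [nq [hu ceq]]]]] : sn_clean_elt u.
  apply: H; exists 0, u; split; first by rewrite /Defs.idem mulr0.
  by split; [exists v|rewrite add0r].
have cuq : GRing.comm u q by rewrite /GRing.comm hu mulrDl mulrDr ceq.
have cvq : GRing.comm v q.
  by rewrite /GRing.comm -[v * q]mulr1 -uv mulrA -(mulrA v) -cuq !mulrA vu mul1r.
have nvq : nilp (v * q) by apply: nilp_commMl.
have [w [w1 [w2 _]]] := unit_1m nvq.
have ee : e = u * (1 - v * q) by rewrite mulrBr mulr1 mulrA uv mul1r hu addrK.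
have e1 : e = 1 by apply: (idem_unit (w := w * v)) => //; rewrite ee -mulrA (mulrA _ w) w1 mul1r uv.
by rewrite hu e1 addrC addKr.
Qed.

Lemma two_nil : CSNC R -> nilp (2%:R : R).
Proof.
move=> H; apply: nilpNE; have := csnc_UU H (u := -1).
rewrite -opprD -mulr2n; apply; exists (-1); by rewrite mulrNN mulr1.
Qed.

Lemma three_unit : CSNC R -> unitP (3%:R : R).
Proof.
move=> H; have := unitP_1m (nilpN (two_nil H)).
by rewrite opprK -mulrS.
Qed.

End UUsec.
Section Jac.
Variable R : pzRingType.
Implicit Types x y z e q u v r m j t : R.

Lemma J_char_r x : (forall r, exists v, v * (1 - r * x) = 1) -> jacobson x.
Proof.
move=> h M hM; apply: NNPP => nMx.
have [m [r [hm e1]]] := max_gen hM nMx.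
have [v hv] := h r.
apply: (max_no_unit hM hm (v := v)).
by rewrite -hv e1 addrK.
Qed.

Lemma J_char_l x : jacobson x -> forall r, exists v, v * (1 - r * x) = 1.
Proof.
move=> Jx r; apply: NNPP => nv.
set y := 1 - r * x.
pose Good (N : R -> Prop) := left_ideal N /\ N y /\ ~ N 1.
pose P (N : classical_sets.set R) := Good N \/ (forall z, ~ N z).
pose N0 := fun z => exists t, z = t * y.
have N0good : Good N0.
  split; first split; first split.
  - by exists 0; rewrite mul0r.
  - by move=> a b [t1 ->] [t2 ->]; exists (t1 - t2); rewrite mulrBl.
  - by move=> s a [t ->]; exists (s * t); rewrite mulrA.
  split; first by exists 1; rewrite mul1r.
  by case=> t ht; apply: nv; exists t.
have good_of : forall N, P N -> (exists z, N z) -> Good N.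
  by move=> N [//|h] [z hz]; case: (h z).
have [A [PA Amax]] : exists A : classical_sets.set R, P A /\
    (forall B, classical_sets.proper A B -> ~ P B).
  apply: classical_sets.Zorn_bigcup => F FP Ftot.
  case: (classic (exists z X, F X /\ X z)) => [[z0 [X0 [FX0 X0z]]]|no]; last first.
    by right=> z [X FX Xz]; apply: no; exists z, X.
  have gd : forall X z, F X -> X z -> Good X.
    by move=> X z FX Xz; apply: good_of; [apply: FP|exists z].
  have [[[G0 Gs] Gm] [Gy Gn1]] := gd _ _ FX0 X0z.
  left; split; first split; first split.
  - by exists X0.
  - move=> a b [Xa FXa Xaa] [Xb FXb Xbb].
    case: (Ftot _ _ FXa FXb) => sub.
      have [[[_ Hs] _] _] := gd _ _ FXb Xbb.
      by exists Xb => //; apply: Hs => //; apply: sub.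
    have [[[_ Hs] _] _] := gd _ _ FXa Xaa.
    by exists Xa => //; apply: Hs => //; apply: sub.
  - move=> t a [Xa FXa Xaa].
    have [[_ Hm] _] := gd _ _ FXa Xaa.
    by exists Xa => //; apply: Hm.
  split; first by exists X0.
  move=> [X FX X1]; have [_ [_ H1]] := gd _ _ FX X1; exact: H1.
have GA : Good A.
  apply: good_of => //; apply: NNPP => nA.
  apply: (Amax N0); last by left.
  split; first by move=> t At; exfalso; apply: nA; exists t.
  move=> h; apply: nA; exists y; apply: h; by exists 1; rewrite mul1r.
have [[[A0 As] Am] [Ay An1]] := GA.
have mA : maximal_left_ideal A.
  split; first by split.
  split; first by exists 1.
  move=> N [[N0' Ns] Nm] sub.
  case: (classic (N 1)) => n1.
    by right=> z; rewrite -[z]mulr1; apply: Nm.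
  have NA : forall z, N z -> A z.
    move=> z Nz; apply: NNPP => nAz.
    apply: (Amax N).
      by split=> // h; apply: nAz; apply: h.
    left; split; first by split.
    by split=> //; apply: sub.
  by left=> z; split; [apply: NA|apply: sub].
have Arx : A (r * x) by apply: Am; apply: Jx.
apply: An1.
have -> : (1 : R) = y - - (r * x) by rewrite opprK subrK.
by apply: (As) => //; rewrite -sub0r; apply: (As).
Qed.

Lemma J_left x t : jacobson x -> jacobson (t * x).
Proof. by move=> Jx M hM; have [[_ Hm] _] := hM; apply: Hm; apply: Jx. Qed.

Lemma J_sub x y : jacobson x -> jacobson y -> jacobson (x - y).
Proof. by move=> Jx Jy M hM; have [[[_ Hs] _] _] := hM; apply: Hs; [apply: Jx|apply: Jy]. Qed.

Lemma J0 : jacobson (0 : R).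
Proof. by move=> M [[[H0 _] _] _]. Qed.

Lemma J_opp x : jacobson x -> jacobson (- x).
Proof. by move=> Jx; rewrite -sub0r; apply: J_sub => //; apply: J0. Qed.

Lemma J_add x y : jacobson x -> jacobson y -> jacobson (x + y).
Proof. by move=> Jx Jy; rewrite -[y]opprK; apply: J_sub => //; apply: J_opp. Qed.

Lemma J_right x t : jacobson x -> jacobson (x * t).
Proof.
move=> Jx; apply: J_char_r => r.
have [v0 hv0] := J_char_l Jx (t * r).
exists (1 + r * x * v0 * t).
rewrite mulrDl mul1r mulrBr mulr1.
have K : r * x * v0 * t - r * x * v0 * t * (r * (x * t)) = r * (x * t).
  have -> : r * x * v0 * t - r * x * v0 * t * (r * (x * t)) =
      r * x * v0 * (t - t * (r * (x * t))) by rewrite mulrBr !mulrA.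
  have -> : t - t * (r * (x * t)) = (1 - t * r * x) * t by rewrite mulrBl mul1r !mulrA.
  by rewrite !mulrA -(mulrA (r * x)) hv0 mulr1.
by rewrite K subrK.
Qed.

Lemma J_unit j : jacobson j -> unitP (1 - j).
Proof.
move=> Jj; have [v hv] := J_char_l Jj 1; rewrite mul1r in hv.
have ev : v = 1 - (- v) * j by rewrite mulNr opprK {1}(_ : 1 = v * (1 - j)) // mulrBr mulr1 subrK.
have [w hw] := J_char_l Jj (- v); rewrite -ev in hw.
have wj : w = 1 - j by rewrite -[w]mulr1 -{1}hv mulrA hw mul1r.
by exists v; split=> //; rewrite -wj.
Qed.

Lemma J_idem e : jacobson e -> idem e -> e = 0.
Proof.
move=> Je ie; have [v hv] := J_char_l Je 1; rewrite mul1r in hv.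
by rewrite -[e]mul1r -hv -mulrA mulrBl mul1r ie subrr mulr0.
Qed.

Lemma J_nil : CSNC R -> forall j, jacobson j -> nilp j.
Proof.
move=> H j Jj; apply: nilpNE; have := csnc_UU H (J_unit Jj).
by rewrite addrC addKr.
Qed.

End Jac.
Section Mat.
Variable R : pzRingType.
Implicit Types x y z e q u v r m j t : R.

Lemma mat_contra (f h a b : R) : CSNC R -> idem f -> idem h ->
  f * h = 0 -> h * f = 0 -> f * a = a -> a * h = a -> h * b = b -> b * f = b ->
  a * b = f -> b * a = h -> a * f = 0 -> h * a = 0 -> f * b = 0 -> b * h = 0 ->
  a * a = 0 -> b * b = 0 -> f = 0.
Proof.
move=> H ff hh fh hf fa ah hb bf ab ba af ha fb bh aa bb.
set g := f + h; set c := b - a - h.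
have gg : g * g = g by rewrite /g mulrDl !mulrDr ff hh fh hf addr0 add0r.
have gc : g * c = c.
  by rewrite /g /c mulrDl !mulrBr fb fa fh hb ha hh sub0r !subr0 addrCA addrA.
have cg : c * g = c.
  by rewrite /g /c !mulrBl !mulrDr bf bh af ah hf hh !addr0 !add0r.
have cc : c * c = - (c + g).
  rewrite /c /g !mulrBl !mulrBr bb ba bh ab aa ah hb ha hh !sub0r !subr0.
  have e1 : h + (f - a) + (b - h) = b + (f - a) by rewrite addrC addrA subrK.
  have e2 : b - a - h + (f + h) = b + (f - a).
    by rewrite addrACA addNr addr0 -addrA [- a + f]addrC.
  by rewrite e2 -e1 !opprD.
have fg : f * g = f by rewrite /g mulrDr ff fh addr0.
clearbody c g.
have ccc : c * (c * c) = g.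
  by rewrite cc mulrN mulrDr cc cg opprD opprK addrC addKr.
set p := 1 - g.
have pc : p * c = 0 by rewrite /p mulrBl mul1r gc subrr.
have cp : c * p = 0 by rewrite /p mulrBr mulr1 cg subrr.
have pp : p * p = p by rewrite /p mulrBl mul1r mulrBr mulr1 gg subrr subr0.
set w := p + c.
have ww : w * w = p + c * c.
  by rewrite /w mulrDl (mulrDr p p c) (mulrDr c p c) pp pc cp addr0 add0r.
have pg : p + g = 1 by rewrite /p subrK.
have w3 : w * (w * w) = 1.
  by rewrite ww /w mulrDl (mulrDr p p (c * c)) (mulrDr c p (c * c)) pp (mulrA p c c) pc mul0r cp add0r ccc addr0 pg.
have w3' : (w * w) * w = 1.
  by rewrite ww /w mulrDl (mulrDr p p c) (mulrDr (c * c) p c) pp pc addr0 -mulrA cp mulr0 add0r -mulrA ccc pg.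
have nw : nilp (w - 1) by apply: csnc_UU => //; exists (w * w).
have wd : w - 1 = c - g.
  by rewrite /w /p (addrAC (1 - g) c (-1)) (addrAC 1 (-g) (-1)) subrr add0r addrC.
rewrite wd in nw.
set d := c - g in nw.
have dd : d * d = - (3%:R * c).
  rewrite /d (mulrBl (c - g) c g) (mulrBr c c g) (mulrBr g c g) cc cg gc gg mulr_natl.
  rewrite opprB opprD (addrAC (- c) (- g) (- c)) -(addrA (- c - c) (- g) (g - c)) addKr -!opprD.
  by rewrite !mulrS mulr0n addr0 addrA.
have ndd : nilp (d * d) by apply: nilp_commM.
rewrite dd in ndd; move/nilpNE: ndd => [n hn].
have c3 : GRing.comm (3%:R : R) c by apply: commr_sym; apply: commr_nat.
rewrite exprMn_comm // in hn.
have [i3 [h3 h3']] := three_unit H.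
have cn : c ^+ n = 0.
  have ci : GRing.comm i3 3%:R by rewrite /GRing.comm h3 h3'.
  by rewrite -[c ^+ n]mul1r -(expr1n _ n) -h3' exprMn_comm // -mulrA hn mulr0.
have cn1 : c ^+ n.+1 = 0 by rewrite exprSr cn mul0r.
have g3 : c ^+ 3 = g by rewrite !exprS expr0 mulr1 ccc.
have gpow : forall k, g ^+ k.+1 = g.
  by elim=> [|k IH]; [rewrite expr1|rewrite exprS IH gg].
have g0 : g = 0 by rewrite -(gpow n) -g3 -exprM mulSn exprD cn1 mul0r.
by rewrite -fg g0 mulr0.
Qed.
End Mat.
Section Corner.
Variable R : pzRingType.
Implicit Types x y z e q u v r m j t : R.

Lemma corner_J e r : CSNC R -> semi_potent R -> idem e ->
  jacobson (e * r * (1 - e)).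
Proof.
move=> H SP ie.
have ex : e * (e * r * (1 - e)) = e * r * (1 - e) by rewrite !mulrA ie.
have xe : (e * r * (1 - e)) * e = 0 by rewrite -mulrA mulrBl mul1r ie subrr mulr0.
move: ex xe; set x := e * r * (1 - e); clearbody x => ex xe.
apply: NNPP => nJ.
pose I z := exists t, z = x * t.
have rI : right_ideal I.
  split; first split.
  - by exists 0; rewrite mulr0.
  - by move=> a b [t1 ->] [t2 ->]; exists (t1 - t2); rewrite mulrBr.
  - by move=> s a [t ->]; exists (t * s); rewrite mulrA.
have [f0 [[t0 ef0] [if0 nf0]]] : exists f0, I f0 /\ idem f0 /\ f0 <> 0.
  apply: SP; first by right.
  by move=> h; apply: nJ; apply: h; exists 1; rewrite mulr1.
rewrite ef0 in if0 nf0; clear ef0 f0.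
have x1e : x * (1 - e) = x by rewrite mulrBr mulr1 xe subr0.
pose t := t0 * e.
have ff : idem (x * t).
  rewrite /Defs.idem /t !mulrA -(mulrA (x * t0) e x) ex.
  by rewrite -(mulrA (x * t0) x t0) if0.
have nf : x * t != 0.
  apply/eqP => h0; apply: nf0.
  rewrite -if0 -{2}ex !mulrA.
  by rewrite -(mulrA x t0 e) -/t h0 !mul0r.
have ef : e * (x * t) = x * t by rewrite mulrA ex.
have fe : (x * t) * e = x * t by rewrite /t !mulrA -(mulrA _ e e) ie.
clearbody t.
move: ff nf ef fe; set f := x * t => ff nf ef fe.
have xt : x * t = f by [].
clearbody f.
have f1e : f * (1 - e) = 0 by rewrite mulrBr mulr1 fe subrr.
have xf : x * f = 0 by rewrite -ef mulrA xe mul0r.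
pose a := f * x.
pose b := (1 - e) * t * f.
pose h := b * a.
have fa : f * a = a by rewrite /a mulrA ff.
have af : a * f = 0 by rewrite /a -mulrA xf mulr0.
have aa : a * a = 0 by rewrite /a -mulrA (mulrA x f x) xf mul0r mulr0.
have bf : b * f = b by rewrite /b -mulrA ff.
have fb : f * b = 0 by rewrite /b !mulrA f1e !mul0r.
have bb : b * b = 0 by rewrite /b !mulrA -(mulrA _ f (1 - e)) f1e mulr0 !mul0r.
have ab : a * b = f.
  by rewrite /a /b !mulrA -(mulrA f x (1 - e)) x1e -(mulrA f x t) xt !ff.
clearbody a b.
have ah : a * h = a by rewrite /h mulrA ab fa.
have hb : h * b = b by rewrite /h -mulrA ab bf.
have ha : h * a = 0 by rewrite /h -mulrA aa mulr0.
have bh : b * h = 0 by rewrite /h mulrA bb mul0r.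
have hh : idem h by rewrite /Defs.idem /h -mulrA (mulrA a b a) ab fa.
have fh : f * h = 0 by rewrite /h mulrA fb mul0r.
have hf : h * f = 0 by rewrite /h -mulrA af mulr0.
have := mat_contra H ff hh fh hf fa ah hb bf ab erefl af ha fb bh aa bb.
by move/eqP; rewrite (negbTE nf).
Qed.
End Corner.
Section Bool.
Variable R : pzRingType.
Implicit Types x y z e q u v r m j t : R.

Lemma idem_compl e : idem e -> idem (1 - e).
Proof. by move=> ie; rewrite /Defs.idem mulrBl mul1r mulrBr mulr1 ie subrr subr0. Qed.

Lemma corner_J' e r : CSNC R -> semi_potent R -> idem e ->
  jacobson ((1 - e) * r * e).
Proof.
move=> H SP ie; have := corner_J r H SP (idem_compl ie).
by rewrite opprB addrCA subrr addr0.
Qed.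

Lemma bool_J (a : R) : CSNC R -> semi_potent R -> jacobson (a - a * a).
Proof.
move=> H SP.
have ba2 : a - a * a = (1 - a) * a by rewrite mulrBl mul1r.
have ba1 : a - a * a = a * (1 - a) by rewrite mulrBr mulr1.
set b := a - a * a in ba1 ba2 *; clearbody b.
apply: NNPP => nJ.
pose I z := exists s, z = s * b.
have lI : left_ideal I.
  split; first split.
  - by exists 0; rewrite mul0r.
  - by move=> x y [t1 ->] [t2 ->]; exists (t1 - t2); rewrite mulrBl.
  - by move=> t x [s ->]; exists (t * s); rewrite mulrA.
have [e [[s es] [ie ne]]] : exists e, I e /\ idem e /\ e <> 0.
  apply: SP; first by left.
  by move=> h; apply: nJ; apply: h; exists 1; rewrite mul1r.
have e1e : e * (1 - e) = 0 by rewrite mulrBr mulr1 ie subrr.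
pose k := (1 - e) * (1 - a) * e.
have Jk : jacobson k by apply: corner_J'.
have eae : e * (1 - a) * e = (1 - a) * e - k.
  have -> : k = (1 - a) * e - e * (1 - a) * e by rewrite /k (mulrBl (1 - a) 1 e) mul1r (mulrBl e (1 - a) (e * (1 - a))).
  by rewrite opprB addrCA subrr addr0.
have sbe : s * a * ((1 - a) * e) = e by rewrite !mulrA -(mulrA s a) -ba1 -es ie.
pose w := (1 - a) * e + (1 - e).
pose y := s * a * e + (1 - e).
have yw : y * w = 1 + (k - s * a * k).
  rewrite /y /w mulrDl (mulrDr (s * a * e)) (mulrDr (1 - e)).
  rewrite -(mulrA (s * a) e ((1 - a) * e)) (mulrA e (1 - a) e) eae mulrBr sbe.
  rewrite -(mulrA (s * a) e (1 - e)) e1e mulr0 addr0 (mulrA (1 - e)) -/k (idem_compl ie).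
  rewrite addrCA [in RHS]addrCA; congr (k + _).
  by rewrite addrC addrA subrK.
have Jyw : jacobson (k - s * a * k) by apply: J_sub => //; apply: J_left.
have [v0 [_ hv0]] : unitP (y * w).
  by have := J_unit (J_opp Jyw); rewrite opprK -yw.
pose yy := v0 * y.
have yyw : yy * w = 1 by rewrite /yy -mulrA hv0.
pose p := w * yy.
have ip : idem p by rewrite /Defs.idem /p -mulrA (mulrA yy w yy) yyw mul1r.
have pw : p * w = w by rewrite /p -mulrA yyw mulr1.
have Jwq : jacobson (w * (1 - p)).
  have := corner_J w H SP ip; by rewrite pw.
have Jq : jacobson (1 - p) by have := J_left yy Jwq; rewrite mulrA yyw mul1r.
have p1 : p = 1.
  have := J_idem Jq (idem_compl ip); move/eqP; rewrite subr_eq0 => /eqP.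
  by move=> <-.
have uw : unitP w by exists yy; split=> //.
have nw := csnc_UU H uw.
have wm1 : w - 1 = - (a * e).
  rewrite /w -addrA (addrAC 1 (- e) (-1)) subrr add0r mulrBl mul1r.
  by rewrite (addrAC e (- (a * e)) (- e)) subrr add0r.
rewrite wm1 in nw; move/nilpNE: nw => [n hn].
pose k2 := (1 - e) * a * e.
have Jk2 : jacobson k2 by apply: corner_J'.
have eae2 : e * a * e = a * e - k2.
  have -> : k2 = a * e - e * a * e by rewrite /k2 (mulrBl a 1 e) mul1r (mulrBl e a (e * a)).
  by rewrite opprB addrCA subrr addr0.
pose v' := s * (1 - a) * e.
have base : jacobson (v' * (a * e) - e).
  have -> : v' * (a * e) - e = - (s * (1 - a) * k2).
    rewrite /v' -(mulrA (s * (1 - a)) e (a * e)) (mulrA e a e) eae2 mulrBr.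
    have -> : s * (1 - a) * (a * e) = e by rewrite !mulrA -(mulrA s (1 - a) a) -ba2 -es ie.
    by rewrite (addrAC e _ (- e)) subrr add0r.
  by apply: J_opp; apply: J_left.
have v'e : v' * e = v' by rewrite /v' -mulrA ie.
have step : forall i, jacobson (v' ^+ i.+1 * (a * e) ^+ i.+1 - e).
  elim=> [|i IH]; first by rewrite !expr1.
  have -> : v' ^+ i.+2 * (a * e) ^+ i.+2 - e =
      v' * (v' ^+ i.+1 * (a * e) ^+ i.+1 - e) * (a * e) + (v' * (a * e) - e).
    rewrite (exprS v') (exprSr (a * e)) mulrBr mulrBl !mulrA v'e.
    by rewrite addrA subrK.
  by apply: J_add => //; apply: J_right; apply: J_left.
have := step n; rewrite (exprSr (a * e)) hn mul0r mulr0 sub0r => /J_opp; rewrite opprK => Je.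
by apply: ne; apply: J_idem.
Qed.
End Bool.
Lemma newton (k : nat) : exists E P Q : {poly int},
  E * E - E = ('X - 'X * 'X) ^+ (2 ^ k) * Q /\ 'X - E = ('X - 'X * 'X) * P.
Proof.
elim: k => [|k [E [P [Q [hE hP]]]]].
  exists 'X, 0, (-1); rewrite expn0 expr1; split; ring.
set d := 'X - 'X * 'X in hE hP *.
set D := d ^+ (2 ^ k) in hE.
have hD : D = d * d ^+ (2 ^ k).-1 by rewrite /D -exprS prednK // expn_gt0.
exists (3%:R * E * E - 2%:R * E * E * E),
  (P - d ^+ (2 ^ k).-1 * Q * (1 - 2%:R * E)),
  (- (Q * Q) * ((3%:R - 2%:R * E) * (1 + 2%:R * E))).
split.
  have -> : d ^+ (2 ^ k.+1) = D * D by rewrite expnS mul2n -addnn exprD.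
  have -> : (3%:R * E * E - 2%:R * E * E * E) * (3%:R * E * E - 2%:R * E * E * E)
     - (3%:R * E * E - 2%:R * E * E * E) =
     - ((E * E - E) * (E * E - E)) * ((3%:R - 2%:R * E) * (1 + 2%:R * E)) by ring.
  rewrite hE; ring.
have -> : 'X - (3%:R * E * E - 2%:R * E * E * E) = ('X - E) - (E * E - E) * (1 - 2%:R * E) by ring.
rewrite hE hP hD; ring.
Qed.

Lemma lift_nz (R : nzRingType) (a : R) : nilp (a - a * a) -> sn_clean_elt a.
Proof.
case=> N hN.
have cf : commr_rmorph (intr : int -> R) a.
  by move=> x; rewrite /GRing.comm mulrzl mulrzr.
have [E [P [Q [hE hP]]]] := newton N.
have phX : horner_morph cf 'X = a by rewrite horner_morphX.
have phd : horner_morph cf ('X - 'X * 'X) = a - a * a.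
  by rewrite rmorphB rmorphM /= phX.
set b := a - a * a in hN phd.
have bN : b ^+ (2 ^ N) = 0.
  have le : (N <= 2 ^ N)%N by apply: ltnW; apply: ltn_expl.
  by rewrite -(subnK le) exprD hN mulr0.
have phcomm : forall p1 p2 : {poly int},
    horner_morph cf p1 * horner_morph cf p2 = horner_morph cf p2 * horner_morph cf p1.
  by move=> p1 p2; rewrite -!rmorphM mulrC.
set e := horner_morph cf E.
exists e, (a - e); split.
  rewrite /Defs.idem; apply/eqP; rewrite -subr_eq0; apply/eqP.
  by rewrite /e -rmorphM -rmorphB hE rmorphM rmorphXn /= phd bN mul0r.
split.
  exists (2 ^ N)%N.
  have -> : a - e = horner_morph cf ('X - E) by rewrite rmorphB /= phX.
  by rewrite hP -rmorphXn exprMn rmorphM rmorphXn /= phd bN mul0r.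
split; first by rewrite addrC subrK.
have -> : a - e = horner_morph cf ('X - E) by rewrite rmorphB /= phX.
by rewrite phcomm.
Qed.

Definition nzT {R : pzRingType} (H : (1:R) != 0) : Type := R.
HB.instance Definition _ (R : pzRingType) (H : (1:R) != 0) := GRing.PzRing.on (nzT H).
HB.instance Definition _ (R : pzRingType) (H : (1:R) != 0) :=
  GRing.PzSemiRing_isNonZero.Build (nzT H) H.

Lemma lift (R : pzRingType) (a : R) : nilp (a - a * a) -> sn_clean_elt a.
Proof.
case: (eqVneq (1 : R) 0) => [h10|H].
  have z : forall x : R, x = 0 by move=> x; rewrite -[x]mulr1 h10 mulr0.
  move=> _; exists 0, 0; split; first by rewrite /Defs.idem mulr0.
  split; first by exists 1%N; rewrite expr1.
  by split; [rewrite (z a) addr0|].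
exact: (@lift_nz (nzT H) a).
Qed.

Theorem mainTheorem5 (R : pzRingType) :
  strongly_nil_clean R <-> (CSNC R /\ semi_potent R).
Proof.
split.
  move=> H; split; last exact: snc_semipotent.
  by move=> a _; apply: H.
move=> [H SP] a; apply: lift.
exact: J_nil H _ (bool_J a H SP).
Qed.
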